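(* Let $(A,\succ_A,\prec_A)$ be an anti-pre-Leibniz algebra and define $$x\vdash_A y=x\succ_A y+2\,x\prec_A y,\qquad x\dashv_A y=-y\prec_A x-2\,y\succ_A x,\quad\forall x,y\in A.$$ Then $(A,\vdash_A,\dashv_A)$ satisfies (ND1), (ND2), (ND3) (i.e. is a transformed pre-Leibniz algebra) if and only if $(A,\succ_A,\prec_A)$ is an admissible Novikov dialgebra. Moreover, in this case $(A,\vdash_A,\dashv_A)$ is a Novikov dialgebra.
   Context: All vector spaces are over a field $\mathbb K$ of characteristic zero. Identities for multiplications $\vdash_A,\dashv_A$, for all $x,y,z$: (ND1) $x\vdash_A(y\vdash_A z)=(x\vdash_A y)\vdash_A z-(y\dashv_A x)\vdash_A z+y\vdash_A(x\vdash_A z)$; (ND2) $(y\vdash_A z)\dashv_A x=y\vdash_A(z\dashv_A x)-z\dashv_A(y\vdash_A x)+(z\dashv_A y)\dashv_A x$; (ND3) $z\dashv_A(x\vdash_A y)=z\dashv_A(x\dashv_A y)$; (ND4) $(z\dashv_A y)\dashv_A x=(z\dashv_A x)\dashv_A y$; (ND5) $(y\dashv_A x)\vdash_A z=(y\vdash_A z)\dashv_A x=(y\vdash_A x)\vdash_A z$. A Novikov dialgebra is $(A,\vdash_A,\dashv_A)$ satisfying (ND1)–(ND5). For multiplications $\succ_A,\prec_A$ set $x\circ_A y=x\succ_A y+x\prec_A y$. Identities: (AL1) $(x\circ_A y)\prec_A z=x\succ_A(y\circ_A z)-y\succ_A(x\circ_A z)$; (AL2) $(x\circ_A y)\succ_A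 z=y\succ_A(x\succ_A z)-x\succ_A(y\succ_A z)$; (AL3) $x\prec_A(y\circ_A z)=(y\succ_A x)\prec_A z-y\succ_A(x\prec_A z)$; (AL4) $(x\succ_A y)\prec_A z=-(y\prec_A x)\prec_A z$; (AN1) $(x\succ_A y)\succ_A z=-(y\prec_A x)\succ_A z$; (AN2) $x\prec_A(y\prec_A z)-y\prec_A(x\prec_A z)=2(x\prec_A y)\prec_A z-2(y\prec_A x)\prec_A z$; (AN3) $(x\succ_A y)\succ_A z+y\prec_A(x\succ_A z)=2x\succ_A(y\circ_A z)$. An anti-pre-Leibniz algebra satisfies (AL1)–(AL4); an admissible Novikov dialgebra satisfies (AL2)–(AL4) and (AN1)–(AN3). *)

(* Defs.v *)
From mathcomp Require Import all_boot all_algebra.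
Set Implicit Arguments. Unset Strict Implicit. Unset Printing Implicit Defensive.
Import GRing.Theory.
Local Open Scope ring_scope.

Definition bilinear_mul (K : fieldType) (A : lmodType K) (m : A -> A -> A) : Prop :=
  (forall (a : K) (x y z : A), m (a *: x + y) z = a *: m x z + m y z) /\
  (forall (a : K) (x y z : A), m x (a *: y + z) = a *: m x y + m x z).

Section Identities.
Variables (K : fieldType) (A : lmodType K).

(* Novikov dialgebra identities, with vd = |- and dv = -| *)
Definition ND1 (vd dv : A -> A -> A) := forall x y z,
  vd x (vd y z) = vd (vd x y) z - vd (dv y x) z + vd y (vd x z).
Definition ND2 (vd dv : A -> A -> A) := forall x y z,
  dv (vd y z) x = vd y (dv z x) - dv z (vd y x) + dv (dv z y) x.
Definition ND3 (vd dv : A -> A -> A) := forall x y z,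
  dv z (vd x y) = dv z (dv x y).
Definition ND4 (vd dv : A -> A -> A) := forall x y z,
  dv (dv z y) x = dv (dv z x) y.
Definition ND5 (vd dv : A -> A -> A) := forall x y z,
  vd (dv y x) z = dv (vd y z) x /\ dv (vd y z) x = vd (vd y x) z.

Definition transformed_pre_Leibniz (vd dv : A -> A -> A) :=
  ND1 vd dv /\ ND2 vd dv /\ ND3 vd dv.
Definition Novikov_dialgebra (vd dv : A -> A -> A) :=
  ND1 vd dv /\ ND2 vd dv /\ ND3 vd dv /\ ND4 vd dv /\ ND5 vd dv.

Definition circ (succ prec : A -> A -> A) x y := succ x y + prec x y.

Definition AL1 (succ prec : A -> A -> A) := forall x y z,
  prec (circ succ prec x y) z = succ x (circ succ prec y z) - succ y (circ succ prec x z).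
Definition AL2 (succ prec : A -> A -> A) := forall x y z,
  succ (circ succ prec x y) z = succ y (succ x z) - succ x (succ y z).
Definition AL3 (succ prec : A -> A -> A) := forall x y z,
  prec x (circ succ prec y z) = prec (succ y x) z - succ y (prec x z).
Definition AL4 (succ prec : A -> A -> A) := forall x y z,
  prec (succ x y) z = - prec (prec y x) z.
Definition AN1 (succ prec : A -> A -> A) := forall x y z,
  succ (succ x y) z = - succ (prec y x) z.
Definition AN2 (succ prec : A -> A -> A) := forall x y z,
  prec x (prec y z) - prec y (prec x z) = 2%:R *: prec (prec x y) z - 2%:R *: prec (prec y x) z.
Definition AN3 (succ prec : A -> A -> A) := forall x y z,
  succ (succ x y) z + prec y (succ x z) = 2%:R *: succ x (circ succ prec y z).

Definition anti_pre_Leibniz (succ prec : A -> A -> A) :=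
  AL1 succ prec /\ AL2 succ prec /\ AL3 succ prec /\ AL4 succ prec.
Definition admissible_Novikov_dialgebra (succ prec : A -> A -> A) :=
  AL2 succ prec /\ AL3 succ prec /\ AL4 succ prec /\
  AN1 succ prec /\ AN2 succ prec /\ AN3 succ prec.

Definition vd_of (succ prec : A -> A -> A) x y := succ x y + 2%:R *: prec x y.
Definition dv_of (succ prec : A -> A -> A) x y := - prec y x - 2%:R *: succ y x.
End Identities.

(* Main.v *)
From HB Require Import structures.
Require Import Defs.
From mathcomp Require Import all_boot all_algebra ring.
Set Implicit Arguments. Unset Strict Implicit. Unset Printing Implicit Defensive.
Import GRing.Theory.
Local Open Scope ring_scope.

Section Sq.
Variables (K : fieldType) (A : lmodType K).
Definition sqz := (K * A)%type.
HB.instance Definition _ := Choice.on sqz.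
Definition sq0 : sqz := (0, 0).
Definition sqadd (u v : sqz) : sqz := (u.1 + v.1, u.2 + v.2).
Definition sqopp (u : sqz) : sqz := (- u.1, - u.2).
Lemma sqaddA : associative sqadd.
Proof. by move=> [? ?] [? ?] [? ?]; rewrite /sqadd /= !addrA. Qed.
Lemma sqaddC : commutative sqadd.
Proof. by move=> [? ?] [? ?]; rewrite /sqadd /=; congr pair; apply: addrC. Qed.
Lemma sqadd0 : left_id sq0 sqadd.
Proof. by move=> [? ?]; rewrite /sqadd /= !add0r. Qed.
Lemma sqaddN : left_inverse sq0 sqopp sqadd.
Proof. by move=> [? ?]; rewrite /sqadd /= !addNr. Qed.
HB.instance Definition _ := GRing.isZmodule.Build sqz sqaddA sqaddC sqadd0 sqaddN.
Definition sq1 : sqz := (1, 0).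
Definition sqmul (u v : sqz) : sqz := (u.1 * v.1, u.1 *: v.2 + v.1 *: u.2).
Lemma sqmulA : associative sqmul.
Proof.
move=> [a x] [b y] [c z]; rewrite /sqmul /=; congr pair; first by rewrite mulrA.
rewrite !scalerDr !scalerA (mulrC c a) (mulrC c b) !addrA; congr (_ + _); apply: addrC.
Qed.
Lemma sqmulC : commutative sqmul.
Proof. by move=> [a x] [b y]; rewrite /sqmul /= mulrC addrC. Qed.
Lemma sqmul1 : left_id sq1 sqmul.
Proof. by move=> [a x]; rewrite /sqmul /= mul1r scale1r scaler0 addr0. Qed.
Lemma sqmulDl : left_distributive sqmul (@GRing.add sqz).
Proof.
move=> [a x] [b y] [c z]; rewrite /sqmul /= /sqadd /=; congr pair; first by rewrite mulrDl.
rewrite scalerDl scalerDr -!addrA; congr (_ + _); rewrite addrC -!addrA; congr (_ + _); apply: addrC.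
Qed.
Lemma sq1_neq0 : sq1 != 0.
Proof. apply/eqP => -[] /eqP; by rewrite oner_eq0. Qed.
HB.instance Definition _ := GRing.Zmodule_isComNzRing.Build sqz sqmulA sqmulC sqmul1 sqmulDl sq1_neq0.
Definition iota (a : A) : sqz := (0, a).
Definition kap (c : K) : sqz := (c, 0).
Lemma iotaD a b : iota (a + b) = iota a + iota b.
Proof. by rewrite /iota; congr pair; rewrite addr0. Qed.
Lemma iotaN a : iota (- a) = - iota a.
Proof. by rewrite /iota; congr pair; rewrite oppr0. Qed.
Lemma iotaB a b : iota (a - b) = iota a - iota b.
Proof. by rewrite iotaD iotaN. Qed.
Lemma iotaZ c a : iota (c *: a) = kap c * iota a.
Proof. by rewrite /iota /kap; apply: injective_projections => /=; rewrite ?mulr0 // scaler0 addr0. Qed.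
Lemma kapn n : kap n%:R = n%:R.
Proof.
elim: n => [|n IH]; first by [].
rewrite -natr1 -[in RHS]natr1 -IH; apply: injective_projections => //=.
by rewrite addr0.
Qed.
Lemma iota_inj : injective iota.
Proof. by move=> a b [->]. Qed.
End Sq.


Lemma bl_Dl (K : fieldType) (A : lmodType K) (m : A -> A -> A) (h : bilinear_mul m) x y z :
  m (x + y) z = m x z + m y z.
Proof. by have [h1 _] := h; rewrite -{1}(scale1r x) h1 scale1r. Qed.
Lemma bl_Dr (K : fieldType) (A : lmodType K) (m : A -> A -> A) (h : bilinear_mul m) x y z :
  m x (y + z) = m x y + m x z.
Proof. by have [_ h2] := h; rewrite -{1}(scale1r y) h2 scale1r. Qed.
Lemma bl_0l (K : fieldType) (A : lmodType K) (m : A -> A -> A) (h : bilinear_mul m) z :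
  m 0 z = 0.
Proof. have [h1 _] := h; have := h1 1 0 0 z; rewrite scale1r !addr0 scale1r => /(congr1 (fun v => v - m 0 z)). by rewrite subrr addrK. Qed.
Lemma bl_0r (K : fieldType) (A : lmodType K) (m : A -> A -> A) (h : bilinear_mul m) z :
  m z 0 = 0.
Proof. have [_ h2] := h; have := h2 1 z 0 0; rewrite scale1r !addr0 scale1r => /(congr1 (fun v => v - m z 0)). by rewrite subrr addrK. Qed.
Lemma bl_Zl (K : fieldType) (A : lmodType K) (m : A -> A -> A) (h : bilinear_mul m) c x z :
  m (c *: x) z = c *: m x z.
Proof. by have [h1 _] := h; rewrite -[c *: x]addr0 h1 (bl_0l h) addr0. Qed.
Lemma bl_Zr (K : fieldType) (A : lmodType K) (m : A -> A -> A) (h : bilinear_mul m) c x z :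
  m z (c *: x) = c *: m z x.
Proof. by have [_ h2] := h; rewrite -[c *: x]addr0 h2 (bl_0r h) addr0. Qed.
Lemma bl_Nl (K : fieldType) (A : lmodType K) (m : A -> A -> A) (h : bilinear_mul m) x z :
  m (- x) z = - m x z.
Proof. by rewrite -scaleN1r (bl_Zl h) scaleN1r. Qed.
Lemma bl_Nr (K : fieldType) (A : lmodType K) (m : A -> A -> A) (h : bilinear_mul m) x z :
  m z (- x) = - m z x.
Proof. by rewrite -scaleN1r (bl_Zr h) scaleN1r. Qed.

Section Main.
Variables (K : fieldType) (A : lmodType K) (succ prec : A -> A -> A).
Hypotheses (hs : bilinear_mul succ) (hp : bilinear_mul prec).
Local Notation circ := (circ succ prec).
Local Notation vd := (vd_of succ prec).
Local Notation dv := (dv_of succ prec).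
Definition dAL1 x y z := prec (circ x y) z - (succ x (circ y z) - succ y (circ x z)).
Definition dAL2 x y z := succ (circ x y) z - (succ y (succ x z) - succ x (succ y z)).
Definition dAL3 x y z := prec x (circ y z) - (prec (succ y x) z - succ y (prec x z)).
Definition dAL4 x y z := prec (succ x y) z - (- prec (prec y x) z).
Definition dAN1 x y z := succ (succ x y) z - (- succ (prec y x) z).
Definition dAN2 x y z := (prec x (prec y z) - prec y (prec x z)) - (2%:R *: prec (prec x y) z - 2%:R *: prec (prec y x) z).
Definition dAN3 x y z := (succ (succ x y) z + prec y (succ x z)) - 2%:R *: succ x (circ y z).
Definition dND1 x y z := vd x (vd y z) - (vd (vd x y) z - vd (dv y x) z + vd y (vd x z)).
Definition dND2 x y z := dv (vd y z) x - (vd y (dv z x) - dv z (vd y x) + dv (dv z y) x).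
Definition dND3 x y z := dv z (vd x y) - dv z (dv x y).
Definition dND4 x y z := dv (dv z y) x - dv (dv z x) y.
Definition dND5a x y z := vd (dv y x) z - dv (vd y z) x.
Definition dND5b x y z := dv (vd y z) x - vd (vd y x) z.

Ltac expand := rewrite /dAL1 /dAL2 /dAL3 /dAL4 /dAN1 /dAN2 /dAN3 /dND1 /dND2 /dND3 /dND4 /dND5a /dND5b
  /vd_of /dv_of /Defs.circ;
  rewrite ?(bl_Dl hs, bl_Dr hs, bl_Zl hs, bl_Zr hs, bl_Nl hs, bl_Nr hs,
            bl_Dl hp, bl_Dr hp, bl_Zl hp, bl_Zr hp, bl_Nl hp, bl_Nr hp);
  apply: (@iota_inj K A); rewrite ?(iotaD, iotaN, iotaZ, kapn); ring.

Lemma kND1 x y z : 1%:R *: dND1 x y z = - (2%:R *: dAL1 x y z) + (2%:R *: dAL1 y x z) - (3%:R *: dAL2 x y z) + (2%:R *: dAL3 x y z) - (2%:R *: dAL3 y x z) - (6%:R *: dAL4 x y z) + (2%:R *: dAN2 x y z).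
Proof. expand. Qed.
Lemma gND1 (hAL1 : forall x y z, dAL1 x y z = 0) (hAL2 : forall x y z, dAL2 x y z = 0) (hAL3 : forall x y z, dAL3 x y z = 0) (hAL4 : forall x y z, dAL4 x y z = 0) (hAN2 : forall x y z, dAN2 x y z = 0) x y z : 1%:R *: dND1 x y z = 0.
Proof. by rewrite kND1 ?hAL1 ?hAL2 ?hAL3 ?hAL4 ?hAN2 ?scaler0 ?oppr0 ?addr0. Qed.

Lemma kND2 x y z : 1%:R *: dND2 x y z = - (4%:R *: dAL1 y x z) - (2%:R *: dAL2 y x z) - (3%:R *: dAL3 x y z) + (2%:R *: dAL3 y x z) + (2%:R *: dAL4 x y z) - (2%:R *: dAN1 x y z) + (2%:R *: dAN3 x y z).
Proof. expand. Qed.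
Lemma gND2 (hAL1 : forall x y z, dAL1 x y z = 0) (hAL2 : forall x y z, dAL2 x y z = 0) (hAL3 : forall x y z, dAL3 x y z = 0) (hAL4 : forall x y z, dAL4 x y z = 0) (hAN1 : forall x y z, dAN1 x y z = 0) (hAN3 : forall x y z, dAN3 x y z = 0) x y z : 1%:R *: dND2 x y z = 0.
Proof. by rewrite kND2 ?hAL1 ?hAL2 ?hAL3 ?hAL4 ?hAN1 ?hAN3 ?scaler0 ?oppr0 ?addr0. Qed.

Lemma kND3 x y z : 1%:R *: dND3 x y z = - (2%:R *: dAL1 x y z) - (2%:R *: dAL1 y x z) - (4%:R *: dAL2 x y z) - (4%:R *: dAL2 y x z) + (dAL4 x y z) + (2%:R *: dAN1 x y z).
Proof. expand. Qed.
Lemma gND3 (hAL1 : forall x y z, dAL1 x y z = 0) (hAL2 : forall x y z, dAL2 x y z = 0) (hAL4 : forall x y z, dAL4 x y z = 0) (hAN1 : forall x y z, dAN1 x y z = 0) x y z : 1%:R *: dND3 x y z = 0.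
Proof. by rewrite kND3 ?hAL1 ?hAL2 ?hAL4 ?hAN1 ?scaler0 ?oppr0 ?addr0. Qed.

Lemma kAN1 x y z : 2%:R *: dAN1 x y z = (8%:R *: dAL1 x y z) - (10%:R *: dAL1 y x z) + (7%:R *: dAL2 x y z) - (2%:R *: dAL2 y x z) - (9%:R *: dAL3 x y z) + (9%:R *: dAL3 y x z) + (8%:R *: dAL4 x y z) + (dND1 x y z) - (dND2 x y z) + (dND2 y x z).
Proof. expand. Qed.
Lemma gAN1 (hAL1 : forall x y z, dAL1 x y z = 0) (hAL2 : forall x y z, dAL2 x y z = 0) (hAL3 : forall x y z, dAL3 x y z = 0) (hAL4 : forall x y z, dAL4 x y z = 0) (hND1 : forall x y z, dND1 x y z = 0) (hND2 : forall x y z, dND2 x y z = 0) x y z : 2%:R *: dAN1 x y z = 0.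
Proof. by rewrite kAN1 ?hAL1 ?hAL2 ?hAL3 ?hAL4 ?hND1 ?hND2 ?scaler0 ?oppr0 ?addr0. Qed.

Lemma kAN2 x y z : 2%:R *: dAN2 x y z = (2%:R *: dAL1 x y z) - (2%:R *: dAL1 y x z) + (3%:R *: dAL2 x y z) - (2%:R *: dAL3 x y z) + (2%:R *: dAL3 y x z) + (6%:R *: dAL4 x y z) + (dND1 x y z).
Proof. expand. Qed.
Lemma gAN2 (hAL1 : forall x y z, dAL1 x y z = 0) (hAL2 : forall x y z, dAL2 x y z = 0) (hAL3 : forall x y z, dAL3 x y z = 0) (hAL4 : forall x y z, dAL4 x y z = 0) (hND1 : forall x y z, dND1 x y z = 0) x y z : 2%:R *: dAN2 x y z = 0.
Proof. by rewrite kAN2 ?hAL1 ?hAL2 ?hAL3 ?hAL4 ?hND1 ?scaler0 ?oppr0 ?addr0. Qed.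

Lemma kAN3 x y z : 2%:R *: dAN3 x y z = (8%:R *: dAL1 x y z) - (6%:R *: dAL1 y x z) + (7%:R *: dAL2 x y z) - (6%:R *: dAL3 x y z) + (7%:R *: dAL3 y x z) + (6%:R *: dAL4 x y z) + (dND1 x y z) + (dND2 y x z).
Proof. expand. Qed.
Lemma gAN3 (hAL1 : forall x y z, dAL1 x y z = 0) (hAL2 : forall x y z, dAL2 x y z = 0) (hAL3 : forall x y z, dAL3 x y z = 0) (hAL4 : forall x y z, dAL4 x y z = 0) (hND1 : forall x y z, dND1 x y z = 0) (hND2 : forall x y z, dND2 x y z = 0) x y z : 2%:R *: dAN3 x y z = 0.
Proof. by rewrite kAN3 ?hAL1 ?hAL2 ?hAL3 ?hAL4 ?hND1 ?hND2 ?scaler0 ?oppr0 ?addr0. Qed.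

Lemma kND4 x y z : 2%:R *: dND4 x y z = - (6%:R *: dAL1 x y z) + (6%:R *: dAL1 y x z) - (3%:R *: dAL2 x y z) + (6%:R *: dAL3 x y z) - (6%:R *: dAL3 y x z) - (6%:R *: dAL4 x y z) - (dND1 x y z).
Proof. expand. Qed.
Lemma gND4 (hAL1 : forall x y z, dAL1 x y z = 0) (hAL2 : forall x y z, dAL2 x y z = 0) (hAL3 : forall x y z, dAL3 x y z = 0) (hAL4 : forall x y z, dAL4 x y z = 0) (hND1 : forall x y z, dND1 x y z = 0) x y z : 2%:R *: dND4 x y z = 0.
Proof. by rewrite kND4 ?hAL1 ?hAL2 ?hAL3 ?hAL4 ?hND1 ?scaler0 ?oppr0 ?addr0. Qed.

Lemma kND5a x y z : 2%:R *: dND5a x y z = - (6%:R *: dAL1 x y z) + (6%:R *: dAL1 y x z) - (6%:R *: dAL2 x y z) + (6%:R *: dAL3 x y z) - (3%:R *: dAL3 y x z) - (6%:R *: dAL4 x y z) - (dND2 y x z).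
Proof. expand. Qed.
Lemma gND5a (hAL1 : forall x y z, dAL1 x y z = 0) (hAL2 : forall x y z, dAL2 x y z = 0) (hAL3 : forall x y z, dAL3 x y z = 0) (hAL4 : forall x y z, dAL4 x y z = 0) (hND2 : forall x y z, dND2 x y z = 0) x y z : 2%:R *: dND5a x y z = 0.
Proof. by rewrite kND5a ?hAL1 ?hAL2 ?hAL3 ?hAL4 ?hND2 ?scaler0 ?oppr0 ?addr0. Qed.

Lemma kND5b x y z : 2%:R *: dND5b x y z = - (6%:R *: dAL1 x y z) - (3%:R *: dAL2 x y z) + (3%:R *: dAL3 x y z) - (6%:R *: dAL3 y x z) - (6%:R *: dAL4 x y z) - (dND1 x y z) + (dND2 x y z).
Proof. expand. Qed.
Lemma gND5b (hAL1 : forall x y z, dAL1 x y z = 0) (hAL2 : forall x y z, dAL2 x y z = 0) (hAL3 : forall x y z, dAL3 x y z = 0) (hAL4 : forall x y z, dAL4 x y z = 0) (hND1 : forall x y z, dND1 x y z = 0) (hND2 : forall x y z, dND2 x y z = 0) x y z : 2%:R *: dND5b x y z = 0.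
Proof. by rewrite kND5b ?hAL1 ?hAL2 ?hAL3 ?hAL4 ?hND1 ?hND2 ?scaler0 ?oppr0 ?addr0. Qed.

End Main.

Theorem proposition3p6 (K : fieldType) (hchar : [pchar K] =i pred0)
  (A : lmodType K) (succ prec : A -> A -> A)
  (hsucc : bilinear_mul succ) (hprec : bilinear_mul prec)
  (hAPL : anti_pre_Leibniz succ prec) :
  (transformed_pre_Leibniz (vd_of succ prec) (dv_of succ prec) <->
     admissible_Novikov_dialgebra succ prec) /\
  (transformed_pre_Leibniz (vd_of succ prec) (dv_of succ prec) ->
     Novikov_dialgebra (vd_of succ prec) (dv_of succ prec)).
Proof.
have [hAL1 [hAL2 [hAL3 hAL4]]] := hAPL.
have hc := (pcharf0P K).1 hchar.
have fromd : forall (a b : A) (n : nat), n.+1%:R *: (a - b) = 0 -> a = b.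
  move=> a b n /eqP; rewrite scaler_eq0 hc /= subr_eq0 => /eqP //.
have eAL1 : forall x y z, dAL1 succ prec x y z = 0.
  by move=> x y z; apply/eqP; rewrite subr_eq0; apply/eqP; apply: hAL1.
have eAL2 : forall x y z, dAL2 succ prec x y z = 0.
  by move=> x y z; apply/eqP; rewrite subr_eq0; apply/eqP; apply: hAL2.
have eAL3 : forall x y z, dAL3 succ prec x y z = 0.
  by move=> x y z; apply/eqP; rewrite subr_eq0; apply/eqP; apply: hAL3.
have eAL4 : forall x y z, dAL4 succ prec x y z = 0.
  by move=> x y z; apply/eqP; rewrite subr_eq0; apply/eqP; apply: hAL4.
have fromND : transformed_pre_Leibniz (vd_of succ prec) (dv_of succ prec) ->
   admissible_Novikov_dialgebra succ prec /\ Novikov_dialgebra (vd_of succ prec) (dv_of succ prec).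
  move=> [hND1 [hND2 hND3]].
  have eND1 : forall x y z, dND1 succ prec x y z = 0.
    by move=> x y z; apply/eqP; rewrite subr_eq0; apply/eqP; apply: hND1.
  have eND2 : forall x y z, dND2 succ prec x y z = 0.
    by move=> x y z; apply/eqP; rewrite subr_eq0; apply/eqP; apply: hND2.
  have eND3 : forall x y z, dND3 succ prec x y z = 0.
    by move=> x y z; apply/eqP; rewrite subr_eq0; apply/eqP; apply: hND3.
  split; first split; [exact: hAL2|split; [exact: hAL3|split; [exact: hAL4|]]|].
    split; [|split]; move=> x y z.
    - apply: (fromd _ _ 1); exact: (@gAN1 K A succ prec hsucc hprec eAL1 eAL2 eAL3 eAL4 eND1 eND2).
    - apply: (fromd _ _ 1); exact: (@gAN2 K A succ prec hsucc hprec eAL1 eAL2 eAL3 eAL4 eND1).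
    - apply: (fromd _ _ 1); exact: (@gAN3 K A succ prec hsucc hprec eAL1 eAL2 eAL3 eAL4 eND1 eND2).
  split; [exact: hND1|split; [exact: hND2|split; [exact: hND3|split]]].
    move=> x y z; apply: (fromd _ _ 1); exact: (@gND4 K A succ prec hsucc hprec eAL1 eAL2 eAL3 eAL4 eND1).
  move=> x y z; split.
    apply: (fromd _ _ 1); exact: (@gND5a K A succ prec hsucc hprec eAL1 eAL2 eAL3 eAL4 eND2).
  apply: (fromd _ _ 1); exact: (@gND5b K A succ prec hsucc hprec eAL1 eAL2 eAL3 eAL4 eND1 eND2).
split; last by move=> /fromND [].
split; first by move=> /fromND [].
move=> [_ [_ [_ [hAN1 [hAN2 hAN3]]]]].
have eAN1 : forall x y z, dAN1 succ prec x y z = 0.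
  by move=> x y z; apply/eqP; rewrite subr_eq0; apply/eqP; apply: hAN1.
have eAN2 : forall x y z, dAN2 prec x y z = 0.
  by move=> x y z; apply/eqP; rewrite subr_eq0; apply/eqP; apply: hAN2.
have eAN3 : forall x y z, dAN3 succ prec x y z = 0.
  by move=> x y z; apply/eqP; rewrite subr_eq0; apply/eqP; apply: hAN3.
split; [|split]; move=> x y z.
- apply: (fromd _ _ 0); exact: (@gND1 K A succ prec hsucc hprec eAL1 eAL2 eAL3 eAL4 eAN2).
- apply: (fromd _ _ 0); exact: (@gND2 K A succ prec hsucc hprec eAL1 eAL2 eAL3 eAL4 eAN1 eAN3).
- apply: (fromd _ _ 0); exact: (@gND3 K A succ prec hsucc hprec eAL1 eAL2 eAL4 eAN1).
Qed.
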